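(* Let $k$ be fixed and let $(P_n)_{n\in\mathbb N}$ be a sequence of orthogonal projections $P_n\in M_k\otimes M_n$ satisfying condition $\mathcal C_1$ with limiting function $f$. Then for any sequence of vectors $x_n\in\mathbb C^k\otimes\mathbb C^n$ with $x_nx_n^*\le P_n$, setting $X_n=\mathrm{Tr}_{\mathbb C^n}[x_nx_n^*]$, we have $$\limsup_{n\to\infty}\mathrm{Tr}[X_nA]\le f(A)\qquad\text{for all }A\in D_k.$$
   Context: $D_k=\{A\in M_k(\mathbb C): A\ge0,\ \mathrm{Tr}A=1\}$. A sequence of orthogonal projections $P_n\in M_k\otimes M_n$ satisfies condition $\mathcal C_m$ if for every $A\in D_k$ the $m$ largest eigenvalues $\lambda_1(P_n(A\otimes I_n)P_n)\ge\dots\ge\lambda_m(P_n(A\otimes I_n)P_n)$ converge as $n\to\infty$ to a common limit $f(A)$. $\mathrm{Tr}_{\mathbb C^n}$ denotes the partial trace over the second factor. *)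

(* Defs.v *)
From HB Require Import structures.
From mathcomp Require Import all_boot all_order all_algebra.
From mathcomp Require Import complex mxtens.
From mathcomp Require Import all_classical all_reals all_analysis.

Set Implicit Arguments.
Unset Strict Implicit.
Unset Printing Implicit Defensive.

Import Order.TTheory GRing.Theory Num.Theory numFieldNormedType.Exports.
Local Open Scope classical_set_scope.
Local Open Scope ring_scope.

Definition adjmx (R : rcfType) (m n : nat) (M : 'M[R[i]]_(m, n)) : 'M[R[i]]_(n, m) :=
  (map_mx (@conjc R) M)^T.

(* Positive semidefinite: Hermitian and u^* M u >= 0 (as a complex number,
   i.e. real and nonnegative) for every vector u. *)
Definition psdmx (R : rcfType) (m : nat) (M : 'M[R[i]]_m) : Prop :=
  adjmx M = M /\ forall u : 'cV[R[i]]_m, 0 <= (adjmx u *m M *m u) 0 0.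

Definition loewner_le (R : rcfType) (m : nat) (M N : 'M[R[i]]_m) : Prop :=
  psdmx (N - M).

Definition density (R : rcfType) (k : nat) (A : 'M[R[i]]_k) : Prop :=
  psdmx A /\ \tr A = 1.

Definition orthoproj (R : rcfType) (m : nat) (P : 'M[R[i]]_m) : Prop :=
  P *m P = P /\ adjmx P = P.

(* Largest eigenvalue lambda_1 of a (Hermitian) matrix: the supremum of its
   real eigenvalues (for Hermitian matrices, all eigenvalues are real). *)
Definition lambda_max (R : realType) (m : nat) (M : 'M[R[i]]_m) : R :=
  sup [set t : R | eigenvalue M (t%:C)%C].

(* Partial trace over the second tensor factor C^n of C^k (x) C^n,
   with the indexing convention of [tensmx] (first factor = C^k). *)
Definition ptrace2 (R : rcfType) (k n : nat) (M : 'M[R[i]]_(k * n)) : 'M[R[i]]_k :=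
  \matrix_(i, j) \sum_(l < n) M (mxtens_index (i, l)) (mxtens_index (j, l)).

Definition condC1 (R : realType) (k : nat) (P : forall n : nat, 'M[R[i]]_(k * n))
  (f : 'M[R[i]]_k -> R) : Prop :=
  forall A : 'M[R[i]]_k, density A ->
    lambda_max (P n *m (A *t (1%:M : 'M[R[i]]_n)) *m P n) @[n --> \oo] --> (f A : R).

(* Main.v *)
Require Import Defs.
From HB Require Import structures.
From mathcomp Require Import all_boot all_order all_algebra.
From mathcomp Require Import complex mxtens spectral sesquilinear.
From mathcomp Require Import all_classical all_reals all_analysis.
From mathcomp Require Import ring lra.
Import Order.TTheory GRing.Theory Num.Theory numFieldNormedType.Exports.
Local Open Scope classical_set_scope.
Local Open Scope ring_scope.

Set Implicit Arguments.
Unset Strict Implicit.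
Section LA.
Variable R : realType.
Local Notation C := (R[i]).
Local Notation Re := (@complex.Re R).
Local Notation Im := (@complex.Im R).

Lemma adjmxE m n (M : 'M[C]_(m,n)) : adjmx M = map_mx Num.conj_op (M^T).
Proof. by rewrite /adjmx map_trmx. Qed.

Lemma adjmx_entry m n (M : 'M[C]_(m,n)) i j : adjmx M i j = conjc (M j i).
Proof. by rewrite /adjmx !mxE. Qed.

Lemma adjmxK m n (M : 'M[C]_(m,n)) : adjmx (adjmx M) = M.
Proof. by apply/matrixP => i j; rewrite !adjmx_entry conjcK. Qed.

Lemma adjmxM m n p (A : 'M[C]_(m,n)) (B : 'M[C]_(n,p)) :
  adjmx (A *m B) = adjmx B *m adjmx A.
Proof. by rewrite /adjmx map_mxM trmx_mul. Qed.

Lemma adjmxB m n (A B : 'M[C]_(m,n)) : adjmx (A - B) = adjmx A - adjmx B.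
Proof. by apply/matrixP => i j; rewrite !mxE rmorphB. Qed.

Lemma ReM (a b : C) : Re (a * b) = Re a * Re b - Im a * Im b.
Proof. by case: a => ? ?; case: b => ? ? /=. Qed.

Lemma ImM (a b : C) : Im (a * b) = Re a * Im b + Im a * Re b.
Proof. by case: a => ? ?; case: b => ? ? /=. Qed.

Lemma Re_conjM (a : C) : Re (conjc a * a) = Re a ^+ 2 + Im a ^+ 2.
Proof. case: a => a b /=; rewrite !expr2; lra. Qed.

Lemma Im_conjM (a : C) : Im (conjc a * a) = 0.
Proof. case: a => a b /=; lra. Qed.

Lemma Re_sum I (r : seq I) (F : I -> C) : Re (\sum_(i <- r) F i) = \sum_(i <- r) Re (F i).
Proof. exact: raddf_sum. Qed.

Lemma Im_sum I (r : seq I) (F : I -> C) : Im (\sum_(i <- r) F i) = \sum_(i <- r) Im (F i).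
Proof. exact: raddf_sum. Qed.


Lemma herm_spec m (M : 'M[C]_m) : adjmx M = M ->
  exists (U : 'M[C]_m) (d : 'rV[C]_m), adjmx U *m U = 1%:M /\ U *m adjmx U = 1%:M /\
    M = adjmx U *m diag_mx d *m U /\ forall i, d 0 i = ((Re (d 0 i))%:C)%C.
Proof.
move=> HM.
have herm : M \is hermsymmx.
  by apply/is_hermitianmxP; rewrite expr0 scale1r -{1}HM adjmxE.
have Uu := spectral_unitarymx M.
have Un := spectral_unit M.
have Hd := hermitian_spectral_diag_real herm.
have /orthomx_spectralP HE := hermitian_normalmx herm.
have adjU : adjmx (spectralmx M) = invmx (spectralmx M).
  by rewrite invmx_unitary // adjmxE.
exists (spectralmx M), (spectral_diag M); split; last split; last split.
- by rewrite adjU mulVmx.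
- by rewrite adjU mulmxV.
- by rewrite adjU.
- move=> i; rewrite RRe_real //.
  by move/mxOverP : Hd => /(_ 0 i).
Qed.

Lemma rowsqE m (z : 'rV[C]_m) : (z *m adjmx z) 0 0 = \sum_i conjc (z 0 i) * z 0 i.
Proof. by rewrite mxE; apply: eq_bigr => i _; rewrite adjmx_entry mulrC. Qed.

Lemma rowsq_ge0 m (z : 'rV[C]_m) : 0 <= Re ((z *m adjmx z) 0 0).
Proof.
rewrite rowsqE Re_sum; apply: sumr_ge0 => i _; rewrite Re_conjM.
by rewrite addr_ge0 // sqr_ge0.
Qed.

Lemma rowsq_gt0 m (z : 'rV[C]_m) : z != 0 -> 0 < Re ((z *m adjmx z) 0 0).
Proof.
move=> nz; rewrite lt_def rowsq_ge0 andbT; apply: contra nz => /eqP H.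
apply/eqP/rowP => i; rewrite mxE; apply/eqP.
move: H; rewrite rowsqE Re_sum => /eqP; rewrite psumr_eq0; last first.
  by move=> j _; rewrite Re_conjM addr_ge0 // sqr_ge0.
move=> /allP /(_ i (mem_index_enum _)); rewrite Re_conjM paddr_eq0 ?sqr_ge0 //.
rewrite !sqrf_eq0 => /andP [/eqP h1 /eqP h2].
by move: h1 h2; case: (z 0 i) => a b /= -> ->.
Qed.

Lemma rowform_spec m (U : 'M[C]_m) d (w : 'rV[C]_m) : adjmx U *m U = 1%:M ->
  (w *m (adjmx U *m diag_mx d *m U) *m adjmx w) 0 0 =
  \sum_i d 0 i * (conjc ((w *m adjmx U) 0 i) * (w *m adjmx U) 0 i) /\
  (w *m adjmx w) 0 0 = ((w *m adjmx U) *m adjmx (w *m adjmx U)) 0 0.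
Proof.
move=> HU; split; last first.
  by rewrite adjmxM adjmxK mulmxA -(mulmxA w) HU mulmx1.
have -> : w *m (adjmx U *m diag_mx d *m U) *m adjmx w =
   (w *m adjmx U) *m diag_mx d *m adjmx (w *m adjmx U).
  by rewrite adjmxM adjmxK !mulmxA.
rewrite mxE; apply: eq_bigr => i _.
rewrite mul_mx_diag !mxE; ring.
Qed.

Lemma ray_sum m (d : 'rV[C]_m) (z : 'rV[C]_m) dm : (forall i, Re (d 0 i) <= dm) ->
 Re (\sum_i d 0 i * (conjc (z 0 i) * z 0 i)) <= dm * Re (\sum_i conjc (z 0 i) * z 0 i).
Proof.
move=> Hd; rewrite !Re_sum mulr_sumr; apply: ler_sum => i _.
rewrite ReM Im_conjM mulr0 subr0; apply: ler_wpM2r => //.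
by rewrite Re_conjM addr_ge0 // sqr_ge0.
Qed.

Lemma key m (M : 'M[C]_m.+1) : adjmx M = M ->
  exists dm : R, (forall w : 'rV_m.+1,
     Re ((w *m M *m adjmx w) 0 0) <= dm * Re ((w *m adjmx w) 0 0)) /\
    (exists2 v : 'rV_m.+1, v *m M = ((dm%:C)%C) *: v & v != 0).
Proof.
move=> HM; have [U [d [HU1 [HU2 [HME Hre]]]]] := herm_spec HM.
have [i0 _ Hi0] := @arg_maxP _ _ _ ord0 xpredT (fun i => Re (d 0 i)) isT.
exists (Re (d 0 i0)); split.
  move=> w; rewrite HME; have [-> ->] := @rowform_spec _ U d w HU1.
  by rewrite rowsqE; apply: ray_sum => i; exact: Hi0.
exists (delta_mx 0 i0 *m U).
  rewrite {1}HME !mulmxA -(mulmxA _ U) HU2 mulmx1 -rowE row_diag_mx.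
  by rewrite -Hre scalemxAl.
apply/negP => /eqP H0.
have : (delta_mx 0 i0 : 'rV_m.+1) *m U *m adjmx U = 0 by rewrite H0 mul0mx.
rewrite -mulmxA HU2 mulmx1 => /matrixP /(_ 0 i0); rewrite !mxE !eqxx /=.
by move/eqP; rewrite oner_eq0.
Qed.

Lemma Re_realM (t : R) (z : C) : Re (((t%:C)%C) * z) = t * Re z.
Proof. by rewrite ReM /= mul0r subr0. Qed.

Lemma lmax_spec m (M : 'M[C]_m.+1) : adjmx M = M ->
  (forall w : 'rV_m.+1,
     Re ((w *m M *m adjmx w) 0 0) <= lambda_max M * Re ((w *m adjmx w) 0 0)) /\
    (exists2 v : 'rV_m.+1, v *m M = (((lambda_max M)%:C)%C) *: v & v != 0).
Proof.
move=> HM; have [dm [Hray [v Hv vnz]]] := key HM.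
suff -> : lambda_max M = dm by split => //; exists v.
rewrite /lambda_max; apply/eqP; rewrite eq_le; apply/andP; split.
  apply: ge_sup; first by exists dm; apply/eigenvalueP; exists v.
  move=> t /eigenvalueP [u Hu unz].
  have := Hray u; rewrite Hu -scalemxAl mxE Re_realM.
  by rewrite ler_pM2r // rowsq_gt0.
apply: ub_le_sup; last by apply/eigenvalueP; exists v.
exists dm => t /eigenvalueP [u Hu unz].
have := Hray u; rewrite Hu -scalemxAl mxE Re_realM.
by rewrite ler_pM2r // rowsq_gt0.
Qed.

Lemma ge0_Re (z : C) : 0 <= z -> 0 <= Re z /\ Im z = 0.
Proof. by rewrite lecE => /andP [/eqP -> ->]. Qed.

Lemma ray_col m (M : 'M[C]_m.+1) (u : 'cV[C]_m.+1) : adjmx M = M ->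
  Re ((adjmx u *m M *m u) 0 0) <= lambda_max M * Re ((adjmx u *m u) 0 0).
Proof.
move=> HM; have [H _] := lmax_spec HM.
by have := H (adjmx u); rewrite adjmxK.
Qed.

Lemma lmax_ge0 m (M : 'M[C]_m.+1) : psdmx M -> 0 <= lambda_max M.
Proof.
move=> [HM Hpsd]; have [_ [v Hv vnz]] := lmax_spec HM.
have := Hpsd (adjmx v); rewrite adjmxK Hv -scalemxAl mxE.
move=> /ge0_Re [H _]; move: H; rewrite Re_realM.
by rewrite pmulr_lge0 // rowsq_gt0.
Qed.

Lemma qformE m (v : 'cV[C]_m) (B : 'M[C]_m) :
  (adjmx v *m B *m v) 0 0 = \sum_a \sum_b conjc (v a 0) * B a b * v b 0.
Proof.
rewrite mxE exchange_big; apply: eq_bigr => b _; rewrite mxE big_distrl.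
by apply: eq_bigr => a _; rewrite adjmx_entry.
Qed.

Lemma sum_tens k n (F : 'I_(k*n) -> C) :
  \sum_a F a = \sum_i \sum_l F (mxtens_index (i,l)).
Proof.
rewrite pair_big /=.
rewrite (reindex (@mxtens_index k n)) /=; last first.
  by apply: onW_bij; exists (@mxtens_unindex k n); [exact: mxtens_indexK|exact: mxtens_unindexK].
by apply: eq_bigr => -[i l].
Qed.

Lemma sum_delta n (F : 'I_n -> C) l : \sum_l' F l' * (l == l')%:R = F l.
Proof.
rewrite (bigD1 l) //= eqxx mulr1 big1 ?addr0 // => j; rewrite eq_sym => /negbTE ->.
by rewrite mulr0.
Qed.

Definition TF k n (A : 'M[C]_k) (v : 'cV[C]_(k*n)) :=
  \sum_i \sum_l \sum_j conjc (v (mxtens_index (i,l)) 0) * A i j * v (mxtens_index (j,l)) 0.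

Lemma tens_form k n (A : 'M[C]_k) (v : 'cV[C]_(k*n)) :
 (adjmx v *m (A *t (1%:M : 'M[C]_n)) *m v) 0 0 = TF A v.
Proof.
rewrite qformE sum_tens; apply: eq_bigr => i _; apply: eq_bigr => l _.
rewrite sum_tens; apply: eq_bigr => j _.
rewrite -(sum_delta (fun l' => (v (mxtens_index (i, l)) 0)^*%C * A i j * v (mxtens_index (j, l')) 0) l).
apply: eq_bigr => l' _.
rewrite tensmxE mxE; case: eqP => [->|_]; ring.
Qed.

Lemma ptrace_form k n (A : 'M[C]_k) (v : 'cV[C]_(k*n)) :
 \tr (ptrace2 (v *m adjmx v) *m A) = TF A v.
Proof.
rewrite /TF /mxtrace.
under eq_bigr => a _ do rewrite mxE.
rewrite exchange_big; apply: eq_bigr => i _.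
under eq_bigr => j _ do rewrite mxE big_distrl.
rewrite exchange_big; apply: eq_bigr => l _; apply: eq_bigr => j _ /=.
by rewrite mxE big_ord1 adjmx_entry; ring.
Qed.

Lemma tens_psd k n (A : 'M[C]_k) : psdmx A -> psdmx (A *t (1%:M : 'M[C]_n)).
Proof.
move=> [HA Hpos]; split.
  apply/matrixP => a b; rewrite -[a]mxtens_unindexK -[b]mxtens_unindexK.
  case: (mxtens_unindex a) => i l; case: (mxtens_unindex b) => j l'.
  rewrite adjmx_entry !tensmxE !mxE rmorphM /= conjc_nat eq_sym.
  by have /matrixP /(_ i j) := HA; rewrite adjmx_entry => ->. 
move=> v; rewrite tens_form /TF exchange_big; apply: sumr_ge0 => l _.
have := Hpos (\col_i v (mxtens_index (i, l)) 0); rewrite qformE.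
move=> H; apply: le_trans H _; rewrite le_eqVlt; apply/orP; left; apply/eqP.
by apply: eq_bigr => i _; apply: eq_bigr => j _; rewrite !mxE.
Qed.

Lemma colsq_Im m (u : 'cV[C]_m) : Im ((adjmx u *m u) 0 0) = 0.
Proof.
rewrite -{2}[u]adjmxK rowsqE Im_sum; apply: big1 => i _; exact: Im_conjM.
Qed.

Lemma colsq_ge0 m (u : 'cV[C]_m) : 0 <= Re ((adjmx u *m u) 0 0).
Proof. by rewrite -{2}[u]adjmxK rowsq_ge0. Qed.

Lemma colsq_eq0 m (u : 'cV[C]_m) : Re ((adjmx u *m u) 0 0) = 0 -> u = 0.
Proof.
move=> H; have : adjmx u = 0.
  apply/eqP; apply: contraT => nz; have := rowsq_gt0 nz.
  by rewrite adjmxK H ltxx.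
by move=> /(congr1 (@adjmx _ _ _)); rewrite adjmxK => ->; apply/matrixP => i j; rewrite adjmx_entry !mxE conjc0.
Qed.

Lemma mx11M p q (A : 'M[C]_(p,1)) (B : 'M[C]_(1,q)) i j : (A *m B) i j = A i 0 * B 0 j.
Proof. by rewrite mxE big_ord1. Qed.

Lemma adjmx1 m : adjmx (1%:M : 'M[C]_m) = 1%:M.
Proof. by apply/matrixP => i j; rewrite adjmx_entry !mxE rmorph_nat eq_sym. Qed.

Lemma proj_fix m (P : 'M[C]_m) (x : 'cV[C]_m) : orthoproj P ->
  loewner_le (x *m adjmx x) P -> P *m x = x /\ Re ((adjmx x *m x) 0 0) <= 1.
Proof.
move=> [PP PA] [_ Hpsd].
pose Q := 1%:M - P.
have HQ : adjmx Q = Q by rewrite /Q adjmxB adjmx1 PA.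
have QP : Q *m P = 0 by rewrite /Q mulmxBl mul1mx PP subrr.
have QQ : Q *m Q = Q by rewrite {1}/Q mulmxBr mulmx1 QP subr0.
have HPx : P *m x = x.
  have E : adjmx (Q *m x) *m (P - x *m adjmx x) *m (Q *m x) =
     - ((adjmx x *m Q *m x) *m (adjmx x *m Q *m x)).
    rewrite adjmxM HQ mulmxBr mulmxBl.
    have -> : adjmx x *m Q *m P *m (Q *m x) = 0 by rewrite -(mulmxA _ Q) QP mulmx0 mul0mx.
    by rewrite sub0r !mulmxA.
  have Es : adjmx x *m Q *m x = adjmx (Q *m x) *m (Q *m x).
    by rewrite adjmxM HQ -{1}QQ !mulmxA.
  have := Hpsd (Q *m x); rewrite E Es mxE mx11M => /ge0_Re [H _].
  move: H; rewrite raddfN /= ReM colsq_Im mulr0 subr0 => H.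
  have H0 : Re ((adjmx (Q *m x) *m (Q *m x)) 0 0) = 0.
    have := colsq_ge0 (Q *m x); nra.
  have /colsq_eq0 := H0; rewrite /Q mulmxBl mul1mx => /eqP.
  by rewrite subr_eq0 => /eqP.
split => //.
have := Hpsd x; rewrite mulmxBr mulmxBl -(mulmxA _ P) HPx !mulmxA.
rewrite -(mulmxA (adjmx x *m x)) {1}mxE [X in _ + X]mxE mx11M => /ge0_Re [H _].
move: H; rewrite raddfB /= ReM colsq_Im mulr0 subr0 => H.
have := colsq_ge0 x; nra.
Qed.

Lemma ray_col' m (M : 'M[C]_m) (u : 'cV[C]_m) : (0 < m)%N -> adjmx M = M ->
  Re ((adjmx u *m M *m u) 0 0) <= lambda_max M * Re ((adjmx u *m u) 0 0).
Proof. by case: m M u => // m M u _; apply: ray_col. Qed.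

Lemma lmax_ge0' m (M : 'M[C]_m) : (0 < m)%N -> psdmx M -> 0 <= lambda_max M.
Proof. by case: m M => // m M _; apply: lmax_ge0. Qed.

Lemma bound_n k n (A : 'M[C]_k) (P : 'M[C]_(k*n)) (x : 'cV[C]_(k*n)) :
  density A -> orthoproj P -> loewner_le (x *m adjmx x) P -> (0 < k*n)%N ->
  Re (\tr (ptrace2 (x *m adjmx x) *m A)) <= lambda_max (P *m (A *t (1%:M : 'M[C]_n)) *m P).
Proof.
move=> [HA _] HP Hx mpos.
have [HPx Hn] := proj_fix HP Hx.
have [PP PA] := HP.
have [TA Tpos] := tens_psd n HA.
set T := A *t (1%:M : 'M[C]_n) in TA Tpos *.
set M := P *m T *m P.
have MA : adjmx M = M by rewrite /M !adjmxM PA TA mulmxA.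
have Mpsd : psdmx M.
  split => // u; rewrite /M.
  have -> : adjmx u *m (P *m T *m P) *m u = adjmx (P *m u) *m T *m (P *m u).
    by rewrite adjmxM PA !mulmxA.
  exact: Tpos.
have xPx : adjmx x *m T *m x = adjmx x *m M *m x.
  by rewrite /M -{1}HPx -{2}HPx adjmxM PA !mulmxA.
rewrite ptrace_form -tens_form -/T xPx.
apply: le_trans (ray_col' x mpos MA) _.
by rewrite ler_piMr // lmax_ge0'.
Qed.

End LA.

Section Lim.
Local Open Scope ereal_scope.
Lemma limn_esup_le_near (R : realType) (u w : (\bar R)^nat) :
  (\forall n \near \oo, u n <= w n) -> limn_esup u <= limn_esup w.
Proof.
move=> [N _ HN].
rewrite /limn_esup !limf_esupE.
apply: le_ereal_inf_tmp => _ [V hV <-].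
apply: (@le_trans _ _ (ereal_sup (u @` (V `&` [set n | (N <= n)%N])))).
  apply: ereal_inf_lbound; exists (V `&` [set n | (N <= n)%N]) => //.
  apply: filterI => //; exists N => //.
apply: ge_ereal_sup => _ [n [Vn Nn] <-]; apply: le_trans (HN n Nn) _.
by apply: ereal_sup_ubound; exists n.
Qed.
End Lim.

Theorem lemma3p5 (R : realType) (k : nat)
  (P : forall n : nat, 'M[R[i]]_(k * n)) (f : 'M[R[i]]_k -> R)
  (HP : forall n, orthoproj (P n))
  (HC1 : condC1 P f)
  (x : forall n : nat, 'cV[R[i]]_(k * n))
  (Hx : forall n, loewner_le (x n *m adjmx (x n)) (P n)) :
  forall A : 'M[R[i]]_k, density A ->
    (limn_esup (fun n => (@complex.Re R (\tr (ptrace2 (x n *m adjmx (x n)) *m A)))%:E)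
      <= (f A)%:E)%E.
Proof.
move=> A HA.
have kpos : (0 < k)%N.
  rewrite lt0n; apply/eqP => k0; case: HA => _; rewrite /mxtrace big1.
    by move=> /eqP; rewrite eq_sym oner_eq0.
  by move=> i _; have := ltn_ord i; rewrite {2}k0.
have Hlim := HC1 A HA.
set lam := fun n => lambda_max (P n *m (A *t (1%:M : 'M[R[i]]_n)) *m P n).
have Hb : \forall n \near \oo,
   ((@complex.Re R (\tr (ptrace2 (x n *m adjmx (x n)) *m A)))%:E <= (lam n)%:E)%E.
  exists 1%N => // n /= n1; rewrite lee_fin.
  by apply: bound_n => //; rewrite muln_gt0 kpos.
apply: le_trans (limn_esup_le_near Hb) _.
have Hc : (fun n => (lam n)%:E) @ \oo --> (f A)%:E.
  apply: cvg_EFin => //; exists 0%N => //.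
rewrite (cvg_limn_einf_sup Hc).2.
by [].
Qed.
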